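(* Let $X_0=0$ and $X_n=\sum_{j=1}^{X_{n-1}}\xi_{n,j}+\varepsilon_n$ for $n\ge1$, where $\{\xi_{n,j},\varepsilon_n\}$ are independent nonnegative integer-valued random variables with $\xi_{n,j}$, $j\in\mathbb N$, identically distributed for each $n$. Let $G_n(x)=\mathbb E x^{\xi_{n,1}}$, $H_n(x)=\mathbb E x^{\varepsilon_n}$, $\rho_n=G_n'(1)\le 1$, and $m_{n,1}=\mathbb E\varepsilon_n$. Define $\overline G_{n+1,n}(x)=x$ and $\overline G_{j,n}(x)=G_j(\overline G_{j+1,n}(x))$ for $j\le n$. Assume $\prod_{n=2}^\infty\rho_n=\rho\in(0,1)$ and $\sum_{n=1}^\infty m_{n,1}<\infty$. Then for every $j$ and $x\in[0,1]$ the limit $\overline G_{j+1,\infty}(x)=\lim_{n\to\infty}\overline G_{j+1,n}(x)$ exists, and $X_n$ converges in distribution to a random variable $Y$ with generating function $$g(x)=\prod_{j=1}^\infty H_j\big(\overline G_{j+1,\infty}(x)\big).$$ *)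

(* Defs.v *)
(* classical reals. Random variables are modelled by their
   probability mass functions on nat. *)
From Stdlib Require Import Reals ClassicalEpsilon.
Open Scope R_scope.

Definition lim (u : nat -> R) : R :=
  epsilon (inhabits 0) (fun l => Un_cv u l).

Definition series (a : nat -> R) : R := lim (fun N => sum_f_R0 a N).

Definition is_pmf (p : nat -> R) : Prop :=
  (forall k, 0 <= p k) /\ infinite_sum p 1.

Definition pgf (p : nat -> R) (x : R) : R := series (fun k => p k * x ^ k).

Definition delta0 (k : nat) : R := if Nat.eqb k 0 then 1 else 0.

Definition conv (p q : nat -> R) (k : nat) : R :=
  sum_f_R0 (fun i => p i * q (k - i)%nat) k.

Fixpoint convpow (p : nat -> R) (m : nat) : nat -> R :=
  match m with
  | O => delta0
  | S m' => conv p (convpow p m')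
  end.

(* law of X_n: X_0 = 0, X_n = sum_{j=1}^{X_{n-1}} xi_{n,j} + eps_n,
   where xi_{n,j} has pmf p n and eps_n has pmf q n, all independent. *)
Fixpoint law (p q : nat -> nat -> R) (n : nat) : nat -> R :=
  match n with
  | O => delta0
  | S n' => fun k =>
      series (fun m => law p q n' m * conv (convpow (p n) m) (q n) k)
  end.

Fixpoint Gcomp (G : nat -> R -> R) (j k : nat) (x : R) : R :=
  match k with
  | O => x
  | S k' => G j (Gcomp G (S j) k' x)
  end.

(* \overline G_{j,n}(x): = x for j = n+1, = G_j(\overline G_{j+1,n}(x)) for j <= n *)
Definition Gbar (G : nat -> R -> R) (j n : nat) (x : R) : R :=
  Gcomp G j (S n - j) x.

(* finite product  prod_{i=a}^{b} f i  (empty product = 1 if b < a) *)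
Fixpoint prod_up (f : nat -> R) (a len : nat) : R :=
  match len with
  | O => 1
  | S l => f a * prod_up f (S a) l
  end.
Definition prodR (f : nat -> R) (a b : nat) : R := prod_up f a (S b - a).

(* Main.v *)
Require Import Defs.
From Stdlib Require Import Reals Lra Lia Psatz ClassicalEpsilon FunctionalExtensionality.
From Coquelicot Require Series.
Open Scope R_scope.

Lemma lim_eq u l : Un_cv u l -> lim u = l.
Proof.
  intro H. unfold lim.
  assert (E : exists l, Un_cv u l) by eauto.
  pose proof (epsilon_spec (inhabits 0) (fun l => Un_cv u l) E) as H2.
  eapply UL_sequence; eauto.
Qed.

Lemma series_eq a l : infinite_sum a l -> series a = l.
Proof. intro H. unfold series. apply lim_eq. exact H. Qed.

Lemma CV_const c : Un_cv (fun _ => c) c.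
Proof. intros e He. exists 0%nat. intros n _. unfold R_dist.
  replace (c - c) with 0 by ring. rewrite Rabs_R0. lra. Qed.

Lemma Un_cv_ext u v l : (forall n, u n = v n) -> Un_cv u l -> Un_cv v l.
Proof. intros E H e He. destruct (H e He) as [N HN]. exists N. intros n Hn.
  rewrite <- E. auto. Qed.

Lemma sum_scal_l (a : nat -> R) c N : sum_f_R0 (fun k => c * a k) N = c * sum_f_R0 a N.
Proof. induction N; simpl; [ring | rewrite IHN; ring]. Qed.

Lemma isum_scal a A c : infinite_sum a A -> infinite_sum (fun k => c * a k) (c * A).
Proof. intro H. apply (Un_cv_ext (fun N => c * sum_f_R0 a N)).
  - intro; symmetry; apply sum_scal_l.
  - apply CV_mult; [apply CV_const | exact H]. Qed.

Lemma isum_plus a b A B : infinite_sum a A -> infinite_sum b B ->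
  infinite_sum (fun k => a k + b k) (A + B).
Proof. intros Ha Hb. apply (Un_cv_ext (fun N => sum_f_R0 a N + sum_f_R0 b N)).
  - intro; symmetry; apply plus_sum.
  - apply CV_plus; auto. Qed.

Lemma isum_ext a b A : (forall k, a k = b k) -> infinite_sum a A -> infinite_sum b A.
Proof. intros E H. replace b with a; auto. apply functional_extensionality; auto. Qed.

Lemma isum_le a b A B : (forall k, a k <= b k) -> infinite_sum a A -> infinite_sum b B -> A <= B.
Proof. intros E Ha Hb. eapply Rle_cv_lim; [|exact Ha|exact Hb].
  intro n. apply sum_Rle. auto. Qed.

Lemma psum_growing a : (forall k, 0 <= a k) -> Un_growing (fun N => sum_f_R0 a N).
Proof. intros P n. simpl. specialize (P (S n)). lra. Qed.

Lemma psum_nonneg a : (forall k, 0 <= a k) -> forall N, 0 <= sum_f_R0 a N.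
Proof. intros P N. induction N; simpl; [apply P|specialize (P (S N)); lra]. Qed.

Lemma psum_le_lim a A : (forall k, 0 <= a k) -> infinite_sum a A -> forall N, sum_f_R0 a N <= A.
Proof. intros P H N. apply (growing_ineq (fun N => sum_f_R0 a N)); auto. apply psum_growing; auto. Qed.

Lemma term_le_sum a A : (forall k, 0 <= a k) -> infinite_sum a A -> forall k, a k <= A.
Proof. intros P H k. eapply Rle_trans; [|apply (psum_le_lim a A P H k)].
  destruct k; simpl; [lra|]. pose proof (psum_nonneg a P k). lra. Qed.

Lemma isum_nonneg a A : (forall k, 0 <= a k) -> infinite_sum a A -> 0 <= A.
Proof. intros P H. eapply Rle_trans; [|apply (term_le_sum a A P H 0)]. auto. Qed.

Lemma isum_exists_le a b B : (forall k, 0 <= a k <= b k) -> infinite_sum b B ->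
  exists A, infinite_sum a A.
Proof. intros P H. destruct (Rseries_CV_comp a b P (exist _ B H)) as [A HA]. eauto. Qed.

Lemma isum_bounded a B : (forall k, 0 <= a k) -> (forall N, sum_f_R0 a N <= B) ->
  exists A, infinite_sum a A /\ A <= B.
Proof. intros P H.
  destruct (growing_cv (fun N => sum_f_R0 a N)) as [A HA].
  - apply psum_growing; auto.
  - exists B. intros x [i ->]. auto.
  - exists A. split; [exact HA|]. eapply Rle_cv_lim; [|exact HA|apply CV_const]. auto. Qed.

Lemma sum_cv (f : nat -> nat -> R) (l : nat -> R) K :
  (forall i, (i <= K)%nat -> Un_cv (fun n => f n i) (l i)) ->
  Un_cv (fun n => sum_f_R0 (f n) K) (sum_f_R0 l K).
Proof. induction K; intro H; simpl.
  - apply H; lia.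
  - apply CV_plus; [apply IHK; intros; apply H; lia | apply H; lia]. Qed.

Lemma sum_swap (u : nat -> nat -> R) M K :
  sum_f_R0 (fun k => sum_f_R0 (fun m => u m k) M) K =
  sum_f_R0 (fun m => sum_f_R0 (fun k => u m k) K) M.
Proof. induction K; simpl.
  - reflexivity.
  - rewrite IHK. rewrite <- plus_sum. reflexivity. Qed.

Lemma tonelli (u : nat -> nat -> R) (U : nat -> R) S :
  (forall m k, 0 <= u m k) -> (forall m, infinite_sum (u m) (U m)) -> infinite_sum U S ->
  exists V, (forall k, infinite_sum (fun m => u m k) (V k)) /\ infinite_sum V S.
Proof.
  intros P HU HS.
  assert (HUn : forall m, 0 <= U m) by (intro m; eapply isum_nonneg; [|apply HU]; auto).
  assert (Hk : forall k, exists W, infinite_sum (fun m => u m k) W).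
  { intro k. apply (isum_exists_le _ U S); auto. intro m; split; auto.
    eapply term_le_sum; [|apply HU]; auto. }
  set (V := fun k => series (fun m => u m k)).
  assert (HV : forall k, infinite_sum (fun m => u m k) (V k)).
  { intro k. destruct (Hk k) as [W HW]. unfold V. rewrite (series_eq _ W HW). auto. }
  exists V. split; [exact HV|].
  assert (HVn : forall k, 0 <= V k) by (intro k; apply (isum_nonneg (fun m => u m k)); auto).
  assert (B1 : forall K, sum_f_R0 V K <= S).
  { intro K. eapply Rle_cv_lim with
      (Un := fun M => sum_f_R0 (fun k => sum_f_R0 (fun m => u m k) M) K)
      (Vn := fun M => sum_f_R0 U M).
    - intro M. rewrite sum_swap. apply sum_Rle. intros m _.
      apply (psum_le_lim (u m)); auto.
    - apply (sum_cv (fun M k => sum_f_R0 (fun m => u m k) M)). intros; apply HV.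
    - exact HS. }
  destruct (isum_bounded V S HVn B1) as [T [HT HTS]].
  assert (B2 : forall M, sum_f_R0 U M <= T).
  { intro M. eapply Rle_cv_lim with
      (Un := fun K => sum_f_R0 (fun m => sum_f_R0 (fun k => u m k) K) M)
      (Vn := fun _ => T).
    - intro K. rewrite <- sum_swap. eapply Rle_trans; [|apply (psum_le_lim V T HVn HT K)].
      apply sum_Rle. intros k _. apply (psum_le_lim (fun m => u m k)); auto.
    - apply (sum_cv (fun K m => sum_f_R0 (fun k => u m k) K)). intros; apply HU.
    - apply CV_const. }
  assert (S <= T).
  { eapply Rle_cv_lim; [|exact HS|apply CV_const]. auto. }
  replace S with T by lra. exact HT.
Qed.

Definition PGF (a : nat -> R) (g : R -> R) : Prop :=
  (forall k, 0 <= a k) /\ (forall x, 0 <= x <= 1 -> infinite_sum (fun k => a k * x ^ k) (g x)).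

Lemma PGF_ext a g h : (forall x, 0 <= x <= 1 -> g x = h x) -> PGF a g -> PGF a h.
Proof. intros E [P H]. split; auto. intros x Hx. rewrite <- E; auto. Qed.

Lemma pow_le1 x k : 0 <= x <= 1 -> 0 <= x ^ k <= 1.
Proof. intro Hx. split; [apply pow_le; lra|]. rewrite <- (pow1 k). apply pow_incr; lra. Qed.

Lemma pow_diff_le x y k : 0 <= x -> x <= y -> y <= 1 -> 0 <= y ^ k - x ^ k <= INR k * (y - x).
Proof. intros H0 H1 H2. induction k.
  - simpl. lra.
  - rewrite S_INR. simpl.
    assert (0 <= x ^ k <= 1) by (apply pow_le1; lra).
    assert (0 <= y ^ k <= 1) by (apply pow_le1; lra).
    replace (y * y ^ k - x * x ^ k) with (y * (y ^ k - x ^ k) + x ^ k * (y - x)) by ring.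
    split; nra. Qed.

Lemma pmf_PGF a : is_pmf a -> PGF a (pgf a).
Proof. intros [P H]. split; auto. intros x Hx.
  destruct (isum_exists_le (fun k => a k * x ^ k) a 1) as [A HA]; auto.
  - intro k. pose proof (pow_le1 x k Hx). specialize (P k). split; nra.
  - unfold pgf. rewrite (series_eq _ A HA). exact HA. Qed.

Lemma pgf_one a : is_pmf a -> pgf a 1 = 1.
Proof. intros [P H]. apply series_eq. eapply isum_ext; [|exact H].
  intro k; simpl. rewrite pow1; ring. Qed.

Lemma PGF_pmf a g : PGF a g -> g 1 = 1 -> is_pmf a /\ (forall x, 0 <= x <= 1 -> pgf a x = g x).
Proof. intros [P H] E.
  assert (Hp : is_pmf a).
  { split; auto. rewrite <- E. eapply isum_ext; [|apply H; lra]. intro k; simpl. rewrite pow1; ring. }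
  split; auto. intros x Hx. apply series_eq. auto. Qed.

Lemma PGF_range a g x : PGF a g -> g 1 = 1 -> 0 <= x <= 1 -> 0 <= g x <= 1.
Proof. intros [P H] E Hx. split.
  - apply (isum_nonneg (fun k => a k * x ^ k)); auto. intro k. pose proof (pow_le1 x k Hx). specialize (P k); nra.
  - rewrite <- E. apply (isum_le (fun k => a k * x ^ k) (fun k => a k * 1 ^ k)); auto.
    + intro k. rewrite pow1. pose proof (pow_le1 x k Hx). specialize (P k); nra.
    + apply H; lra. Qed.

Lemma PGF_mono a g x y : PGF a g -> 0 <= x -> x <= y -> y <= 1 -> g x <= g y.
Proof. intros [P H] H0 H1 H2. apply (isum_le (fun k => a k * x ^ k) (fun k => a k * y ^ k)).
  - intro k. apply Rmult_le_compat_l; auto. apply pow_incr; lra.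
  - apply H; lra. - apply H; lra. Qed.

Lemma PGF_lip a g mu x y : PGF a g -> infinite_sum (fun k => INR k * a k) mu ->
  0 <= x -> x <= y -> y <= 1 -> g y - g x <= mu * (y - x).
Proof. intros [P H] Hm H0 H1 H2.
  assert (S1 : infinite_sum (fun k => a k * y ^ k + (-1) * (a k * x ^ k)) (g y + (-1) * g x)).
  { apply isum_plus; [apply H; lra|apply isum_scal; apply H; lra]. }
  assert (S2 : infinite_sum (fun k => (y - x) * (INR k * a k)) ((y - x) * mu)) by (apply isum_scal; auto).
  assert (g y + -1 * g x <= (y - x) * mu); [|lra].
  eapply isum_le; [|exact S1|exact S2]. intro k.
  pose proof (pow_diff_le x y k H0 H1 H2). specialize (P k). nra. Qed.

Lemma sum_delta0 x N : sum_f_R0 (fun k => delta0 k * x ^ k) N = 1.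
Proof. induction N; simpl. - unfold delta0; simpl; ring. - rewrite IHN. unfold delta0; simpl; ring. Qed.

Lemma PGF_delta0 : PGF delta0 (fun _ => 1).
Proof. split.
  - intro k; unfold delta0; destruct (Nat.eqb k 0); lra.
  - intros x Hx. apply (Un_cv_ext (fun _ => 1)); [intro; symmetry; apply sum_delta0|apply CV_const]. Qed.

Lemma PGF_conv p q g h : PGF p g -> PGF q h -> PGF (conv p q) (fun x => g x * h x).
Proof. intros [Pp Hp] [Pq Hq]. split.
  - intro k. unfold conv. apply psum_nonneg. intro i. specialize (Pp i). specialize (Pq (k - i)%nat). nra.
  - intros x Hx.
    assert (Ha : forall k, 0 <= p k * x ^ k) by (intro k; pose proof (pow_le1 x k Hx); specialize (Pp k); nra).
    assert (Hb : forall k, 0 <= q k * x ^ k) by (intro k; pose proof (pow_le1 x k Hx); specialize (Pq k); nra).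
    pose proof (Series.is_series_mult (fun k => p k * x ^ k) (fun k => q k * x ^ k) (g x) (h x)) as M.
    apply Series.is_series_Reals.
    eapply Series.is_series_ext; [|apply M].
    + intro k. unfold conv. simpl. rewrite Rmult_comm. rewrite scal_sum.
      apply sum_eq. intros i Hi. replace (x ^ k) with (x ^ i * x ^ (k - i)).
      * ring.
      * rewrite <- pow_add. f_equal. lia.
    + apply Series.is_series_Reals. apply Hp; auto.
    + apply Series.is_series_Reals. apply Hq; auto.
    + exists (g x). apply Series.is_series_Reals. eapply isum_ext; [|apply Hp; auto].
      intro k. rewrite Rabs_pos_eq; auto.
    + exists (h x). apply Series.is_series_Reals. eapply isum_ext; [|apply Hq; auto].
      intro k. rewrite Rabs_pos_eq; auto.
Qed.

Lemma PGF_convpow p g m : PGF p g -> PGF (convpow p m) (fun x => g x ^ m).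
Proof. intro H. induction m; simpl.
  - apply PGF_delta0.
  - apply (PGF_conv _ _ _ _ H IHm). Qed.

Lemma PGF_mix (a : nat -> R) (c : nat -> nat -> R) (A : R -> R) (C : nat -> R -> R) (F : R -> R) :
  PGF a A -> (forall m, PGF (c m) (C m)) -> (forall m, C m 1 = 1) ->
  (forall x, 0 <= x <= 1 -> infinite_sum (fun m => a m * C m x) (F x)) ->
  PGF (fun k => series (fun m => a m * c m k)) F.
Proof.
  intros [Pa Ha] Hc C1 HF.
  assert (Sa : infinite_sum a (A 1)).
  { eapply isum_ext; [|apply Ha; lra]. intro k; simpl; rewrite pow1; ring. }
  assert (Pc : forall m k, 0 <= c m k) by (intros m k; apply (proj1 (Hc m))).
  assert (Lc : forall m k, c m k <= 1).
  { intros m k. rewrite <- (C1 m).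
    replace (c m k) with (c m k * 1 ^ k) by (rewrite pow1; ring).
    apply (term_le_sum (fun k => c m k * 1 ^ k) (C m 1)).
    - intro i; rewrite pow1; rewrite Rmult_1_r; auto.
    - apply (proj2 (Hc m)); lra. }
  assert (W : forall k, exists Wk, infinite_sum (fun m => a m * c m k) Wk).
  { intro k. apply (isum_exists_le _ a (A 1)); auto. intro m. specialize (Pa m).
    specialize (Pc m k); specialize (Lc m k). split; nra. }
  assert (Wn : forall k, 0 <= series (fun m => a m * c m k)).
  { intro k. destruct (W k) as [Wk HW]. rewrite (series_eq _ _ HW).
    apply (isum_nonneg (fun m => a m * c m k)); auto. intro m; specialize (Pa m); specialize (Pc m k); nra. }
  split; [exact Wn|]. intros x Hx.
  assert (T1 : forall m k, 0 <= a m * (c m k * x ^ k)).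
  { intros m k. pose proof (pow_le1 x k Hx). apply Rmult_le_pos; [auto|apply Rmult_le_pos; [auto|lra]]. }
  assert (T2 : forall m, infinite_sum (fun k => a m * (c m k * x ^ k)) (a m * C m x)).
  { intro m. apply isum_scal. apply (proj2 (Hc m)); auto. }
  destruct (tonelli (fun m k => a m * (c m k * x ^ k)) (fun m => a m * C m x) (F x) T1 T2 (HF x Hx)) as [V [HV1 HV2]].
  { eapply isum_ext; [|exact HV2]. intro k. simpl.
    destruct (W k) as [Wk HW]. rewrite (series_eq _ _ HW).
    apply (uniqueness_sum (fun m => a m * (c m k * x ^ k))); auto.
    rewrite (Rmult_comm Wk). eapply isum_ext; [|apply (isum_scal _ _ (x ^ k) HW)]. intro m; simpl; ring. }
Qed.

Definition goodG (G : nat -> R -> R) : Prop := forall i, (1 <= i)%nat ->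
  (forall x, 0 <= x <= 1 -> x <= G i x <= 1) /\
  (forall x y, 0 <= x -> x <= y -> y <= 1 -> G i x <= G i y) /\ G i 1 = 1.

Lemma Gcomp_shift G a k x : Gcomp G a (S k) x = Gcomp G a k (G (a + k)%nat x).
Proof. revert a. induction k; intro a.
  - simpl. rewrite Nat.add_0_r. reflexivity.
  - change (Gcomp G a (S (S k)) x) with (G a (Gcomp G (S a) (S k) x)).
    change (Gcomp G a (S k) (G (a + S k)%nat x)) with (G a (Gcomp G (S a) k (G (a + S k)%nat x))).
    rewrite IHk. replace (S a + k)%nat with (a + S k)%nat by lia. reflexivity. Qed.

Section GC.
Variable G : nat -> R -> R.
Hypothesis HG : goodG G.

Lemma Gcomp_range k : forall a x, (1 <= a)%nat -> 0 <= x <= 1 -> x <= Gcomp G a k x <= 1.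
Proof. induction k; intros a x Ha Hx; simpl; [lra|].
  assert (x <= Gcomp G (S a) k x <= 1) by (apply IHk; auto; lia).
  destruct (HG a Ha) as [H1 [H2 H3]].
  assert (Gcomp G (S a) k x <= G a (Gcomp G (S a) k x) <= 1) by (apply H1; lra). lra. Qed.

Lemma Gcomp_mono k : forall a x y, (1 <= a)%nat -> 0 <= x -> x <= y -> y <= 1 ->
  Gcomp G a k x <= Gcomp G a k y.
Proof. induction k; intros a x y Ha H0 H1 H2; simpl; [lra|].
  destruct (HG a Ha) as [_ [H3 _]]. apply H3.
  - pose proof (Gcomp_range k (S a) x ltac:(lia) ltac:(lra)). lra.
  - apply IHk; auto; lia.
  - pose proof (Gcomp_range k (S a) y ltac:(lia) ltac:(lra)). lra. Qed.

Lemma Gcomp_one k : forall a, (1 <= a)%nat -> Gcomp G a k 1 = 1.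
Proof. induction k; intros a Ha; simpl; auto. rewrite IHk by lia. apply (HG a Ha). Qed.

Lemma Gcomp_step k : forall a x, (1 <= a)%nat -> 0 <= x <= 1 -> Gcomp G a k x <= Gcomp G a (S k) x.
Proof. induction k; intros a x Ha Hx.
  - simpl. apply (HG a Ha); auto.
  - change (Gcomp G a (S k) x) with (G a (Gcomp G (S a) k x)).
    change (Gcomp G a (S (S k)) x) with (G a (Gcomp G (S a) (S k) x)).
    destruct (HG a Ha) as [_ [H3 _]]. apply H3.
    + pose proof (Gcomp_range k (S a) x ltac:(lia) ltac:(lra)). lra.
    + apply IHk; auto; lia.
    + pose proof (Gcomp_range (S k) (S a) x ltac:(lia) ltac:(lra)). lra. Qed.

Lemma Gbar_range j n x : 0 <= x <= 1 -> x <= Gbar G (S j) n x <= 1.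
Proof. intro Hx. unfold Gbar. apply Gcomp_range; auto; lia. Qed.

Lemma Gbar_mono j n x y : 0 <= x -> x <= y -> y <= 1 -> Gbar G (S j) n x <= Gbar G (S j) n y.
Proof. intros. unfold Gbar. apply Gcomp_mono; auto; lia. Qed.

Lemma Gbar_one j n : Gbar G (S j) n 1 = 1.
Proof. unfold Gbar. apply Gcomp_one; lia. Qed.

Lemma Gbar_incr j n x : 0 <= x <= 1 -> Gbar G (S j) n x <= Gbar G (S j) (S n) x.
Proof. intro Hx. unfold Gbar. destruct (Compare_dec.le_lt_dec j n) as [Hjn|Hjn].
  - replace (S (S n) - S j)%nat with (S (S n - S j)) by lia. apply Gcomp_step; auto; lia.
  - replace (S (S n) - S j)%nat with (S n - S j)%nat by lia. lra. Qed.

End GC.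

Lemma Gbar_succ G j n x : (j <= n)%nat -> Gbar G (S j) (S n) x = Gbar G (S j) n (G (S n) x).
Proof. intro H. unfold Gbar. replace (S (S n) - S j)%nat with (S (S n - S j)) by lia.
  rewrite Gcomp_shift. f_equal. f_equal. lia. Qed.

Lemma Gbar_self G n x : Gbar G (S n) n x = x.
Proof. unfold Gbar. rewrite Nat.sub_diag. reflexivity. Qed.

Lemma prod_up_S f a l : prod_up f a (S l) = prod_up f a l * f (a + l)%nat.
Proof. revert a. induction l; intro a; simpl.
  - rewrite Nat.add_0_r. ring.
  - simpl in IHl. rewrite IHl. replace (S a + l)%nat with (a + S l)%nat by lia. ring. Qed.

Lemma prod_up_ext f g a l : (forall i, (a <= i < a + l)%nat -> f i = g i) -> prod_up f a l = prod_up g a l.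
Proof. revert a. induction l; intros a H; simpl; auto.
  rewrite (H a) by lia. rewrite (IHl (S a)); auto. intros; apply H; lia. Qed.

Lemma prod_up_add f a l1 l2 : prod_up f a (l1 + l2) = prod_up f a l1 * prod_up f (a + l1) l2.
Proof. revert a. induction l1; intro a; simpl.
  - rewrite Nat.add_0_r. ring.
  - rewrite IHl1. replace (S a + l1)%nat with (a + S l1)%nat by lia. ring. Qed.

Lemma prod_up_one a l : prod_up (fun _ => 1) a l = 1.
Proof. revert a; induction l; intro a; simpl; auto. rewrite IHl; ring. Qed.

Lemma prodR1 f n : prodR f 1 n = prod_up f 1 n.
Proof. unfold prodR. f_equal. lia. Qed.

Lemma pow_le_exp x k N : 0 <= x <= 1 -> x ^ (k + N) <= x ^ k.
Proof. intro Hx. rewrite pow_add. pose proof (pow_le1 x N Hx). pose proof (pow_le1 x k Hx). nra. Qed.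

Lemma PGF_sum1 a g : PGF a g -> g 1 = 1 -> infinite_sum a 1.
Proof. intros [P H] E. rewrite <- E. eapply isum_ext; [|apply H; lra]. intro k; simpl; rewrite pow1; ring. Qed.

Lemma PGF_bounds a g x k : PGF a g -> g 1 = 1 -> 0 <= x <= 1 ->
  sum_f_R0 (fun i => a i * x ^ i) k <= g x <= sum_f_R0 (fun i => a i * x ^ i) k + x ^ (S k).
Proof.
  intros Hg E Hx. pose proof Hg as [P H].
  assert (Pt : forall i, 0 <= a i * x ^ i) by (intro i; pose proof (pow_le1 x i Hx); specialize (P i); nra).
  assert (S1 := PGF_sum1 a g Hg E).
  split; [apply (psum_le_lim _ _ Pt (H x Hx))|].
  assert (Ind : forall N, sum_f_R0 (fun i => a i * x ^ i) (k + N) - sum_f_R0 (fun i => a i * x ^ i) k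
                <= x ^ (S k) * (sum_f_R0 a (k + N) - sum_f_R0 a k)).
  { induction N.
    - rewrite Nat.add_0_r. lra.
    - replace (k + S N)%nat with (S (k + N)) by lia. rewrite !tech5.
      assert (x ^ (S (k + N)) <= x ^ (S k)) by (replace (S (k + N)) with (S k + N)%nat by lia; apply pow_le_exp; auto).
      specialize (P (S (k + N))). nra. }
  assert (Bd : forall n, sum_f_R0 (fun i => a i * x ^ i) n <= sum_f_R0 (fun i => a i * x ^ i) k + x ^ (S k)).
  { intro n. pose proof (pow_le1 x (S k) Hx). destruct (Compare_dec.le_lt_dec n k) as [Hn|Hn].
    - assert (sum_f_R0 (fun i => a i * x ^ i) n <= sum_f_R0 (fun i => a i * x ^ i) k); [|lra].
      replace k with (n + (k - n))%nat by lia. generalize (k - n)%nat. intro d. induction d.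
      + rewrite Nat.add_0_r; lra.
      + replace (n + S d)%nat with (S (n + d)) by lia. rewrite tech5. specialize (Pt (S (n + d))). lra.
    - replace n with (k + (n - k))%nat by lia. specialize (Ind (n - k)%nat).
      pose proof (psum_le_lim a 1 P S1 (k + (n - k))). pose proof (psum_nonneg a P k). nra. }
  eapply Rle_cv_lim; [exact Bd|apply (H x Hx)|apply CV_const].
Qed.

Section CONT.
Variable a : nat -> nat -> R.
Variable g : nat -> R -> R.
Variable P : R -> R.
Hypothesis Ha : forall n, PGF (a n) (g n).
Hypothesis Hg1 : forall n, g n 1 = 1.
Hypothesis HP : forall x, 0 <= x <= 1 -> Un_cv (fun n => g n x) (P x).

Lemma cv_step k : (forall i, (i < k)%nat -> exists l, Un_cv (fun n => a n i) l) ->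
  exists l, Un_cv (fun n => a n k) l.
Proof.
  intro IH.
  set (e := fun n x => g n x - sum_f_R0 (fun i => a n i * x ^ i) k + a n k * x ^ k).
  assert (Be : forall n x, 0 <= x <= 1 -> a n k * x ^ k <= e n x <= a n k * x ^ k + x ^ (S k)).
  { intros n x Hx. pose proof (PGF_bounds (a n) (g n) x k (Ha n) (Hg1 n) Hx). unfold e. lra. }
  assert (Ce : forall x, 0 <= x <= 1 -> exists E, Un_cv (fun n => e n x) E).
  { intros x Hx. destruct k as [|k'].
    - exists (P x). eapply Un_cv_ext; [|apply (HP x Hx)]. intro n. unfold e. simpl. ring.
    - assert (Hi : forall i, (i <= k')%nat -> exists l, Un_cv (fun n => a n i * x ^ i) l).
      { intros i Hi. destruct (IH i ltac:(lia)) as [l Hl]. exists (l * x ^ i).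
        apply CV_mult; [exact Hl|apply CV_const]. }
      set (L := fun i => lim (fun n => a n i * x ^ i)).
      assert (HL : forall i, (i <= k')%nat -> Un_cv (fun n => a n i * x ^ i) (L i)).
      { intros i Hi'. destruct (Hi i Hi') as [l Hl]. unfold L. rewrite (lim_eq _ _ Hl). exact Hl. }
      exists (P x - sum_f_R0 L k').
      eapply Un_cv_ext; [|apply CV_minus; [apply (HP x Hx)|apply (sum_cv (fun n i => a n i * x ^ i) L k' HL)]].
      intro n. unfold e. rewrite tech5. ring. }
  assert (CC : Cauchy_crit (fun n => a n k)); [|destruct (R_complete _ CC) as [l Hl]; eauto].
  intros eps Heps.
  set (x := Rmin (eps / 2) 1).
  assert (Hx0 : 0 < x) by (unfold x; apply Rmin_glb_lt; lra).
  assert (Hx1 : x <= 1) by apply Rmin_r.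
  assert (Hx2 : x <= eps / 2) by apply Rmin_l.
  destruct (Ce x ltac:(lra)) as [E HE].
  pose proof (pow_lt x (S k) Hx0) as Hpk.
  destruct (CV_Cauchy (fun n => e n x) (exist _ E HE) (x ^ (S k)) Hpk) as [N HN].
  exists N. intros n m Hn Hm. specialize (HN n m Hn Hm). unfold R_dist in *.
  apply Rabs_def2 in HN. destruct HN as [HN1 HN2].
  pose proof (Be n x ltac:(lra)). pose proof (Be m x ltac:(lra)).
  pose proof (pow_lt x k Hx0) as Hk. simpl in *.
  apply Rabs_def1.
  - apply (Rmult_lt_reg_r (x ^ k)); auto. nra.
  - apply (Rmult_lt_reg_r (x ^ k)); auto. nra.
Qed.

Lemma coef_cv k : exists l, Un_cv (fun n => a n k) l.
Proof.
  assert (forall K i, (i <= K)%nat -> exists l, Un_cv (fun n => a n i) l); [|eauto].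
  induction K; intros i Hi.
  - apply cv_step. intros; lia.
  - apply cv_step. intros j Hj. apply IHK. lia.
Qed.

Definition ylim k := lim (fun n => a n k).

Lemma ylim_cv k : Un_cv (fun n => a n k) (ylim k).
Proof. destruct (coef_cv k) as [l Hl]. unfold ylim. rewrite (lim_eq _ _ Hl). exact Hl. Qed.

Lemma ylim_nonneg k : 0 <= ylim k.
Proof. eapply Rle_cv_lim; [|apply CV_const|apply ylim_cv]. intro n. apply (proj1 (Ha n)). Qed.

Lemma ylim_pgf x : 0 <= x < 1 -> infinite_sum (fun k => ylim k * x ^ k) (P x).
Proof.
  intros Hx.
  assert (Hs : forall K, Un_cv (fun n => sum_f_R0 (fun i => a n i * x ^ i) K) (sum_f_R0 (fun k => ylim k * x ^ k) K)).
  { intro K. apply (sum_cv (fun n i => a n i * x ^ i)). intros i _. apply CV_mult; [apply ylim_cv|apply CV_const]. }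
  assert (B : forall K, sum_f_R0 (fun k => ylim k * x ^ k) K <= P x <= sum_f_R0 (fun k => ylim k * x ^ k) K + x ^ (S K)).
  { intro K. split.
    - eapply Rle_cv_lim; [|apply Hs|apply (HP x ltac:(lra))]. intro n. apply (PGF_bounds (a n) (g n) x K (Ha n) (Hg1 n)). lra.
    - eapply Rle_cv_lim; [|apply (HP x ltac:(lra))|apply CV_plus; [apply Hs|apply CV_const]].
      intro n. apply (PGF_bounds (a n) (g n) x K (Ha n) (Hg1 n)). lra. }
  intros eps Heps.
  destruct (pow_lt_1_zero x ltac:(rewrite Rabs_pos_eq; lra) eps Heps) as [N HN].
  exists N. intros n Hn. unfold R_dist. specialize (B n). specialize (HN (S n) ltac:(lia)).
  rewrite Rabs_pos_eq in HN by (apply pow_le; lra).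
  apply Rabs_def1; lra.
Qed.

Lemma ylim_pmf K : 0 <= K -> (forall x, 0 <= x < 1 -> 1 - K * (1 - x) <= P x) -> is_pmf ylim.
Proof.
  intros HK HPl. split; [apply ylim_nonneg|].
  assert (Bs : forall N, sum_f_R0 ylim N <= 1).
  { intro N. eapply Rle_cv_lim; [|apply (sum_cv (fun n i => a n i) ylim N); intros; apply ylim_cv|apply CV_const].
    intro n. apply (psum_le_lim (a n) 1 (proj1 (Ha n)) (PGF_sum1 _ _ (Ha n) (Hg1 n))). }
  destruct (isum_bounded ylim 1 ylim_nonneg Bs) as [T [HT HT1]].
  assert (Lo : forall x, 0 <= x < 1 -> P x <= T).
  { intros x Hx. apply (isum_le (fun k => ylim k * x ^ k) ylim); [|apply ylim_pgf; auto|exact HT].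
    intro k. pose proof (pow_le1 x k ltac:(lra)). pose proof (ylim_nonneg k). nra. }
  assert (T = 1); [|subst; auto].
  destruct (Rle_lt_or_eq_dec T 1 HT1) as [Hlt|]; auto. exfalso.
  set (d := Rmin ((1 - T) / (2 * (K + 1))) 1).
  assert (Hd0 : 0 < d) by (unfold d; apply Rmin_glb_lt; [apply Rdiv_lt_0_compat|]; lra).
  assert (Hd1 : d <= 1) by apply Rmin_r.
  assert (Hd2 : d <= (1 - T) / (2 * (K + 1))) by apply Rmin_l.
  assert (Hd3 : d * (2 * (K + 1)) <= 1 - T).
  { apply (Rmult_le_compat_r (2 * (K + 1))) in Hd2; [|lra].
    unfold Rdiv in Hd2. rewrite Rmult_assoc, Rinv_l in Hd2 by lra. lra. }
  pose proof (HPl (1 - d) ltac:(lra)). pose proof (Lo (1 - d) ltac:(lra)). nra.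
Qed.

End CONT.

Fixpoint sum_up (c : nat -> R) (a len : nat) : R :=
  match len with O => 0 | S l => c a + sum_up c (S a) l end.

Lemma sum_up_S c a l : sum_up c a (S l) = sum_up c a l + c (a + l)%nat.
Proof. revert a. induction l; intro a; simpl.
  - rewrite Nat.add_0_r. ring.
  - simpl in IHl. rewrite IHl. replace (S a + l)%nat with (a + S l)%nat by lia. ring. Qed.

Lemma sum_up_add c a l1 l2 : sum_up c a (l1 + l2) = sum_up c a l1 + sum_up c (a + l1) l2.
Proof. revert a. induction l1; intro a; simpl.
  - rewrite Nat.add_0_r. ring.
  - rewrite IHl1. replace (S a + l1)%nat with (a + S l1)%nat by lia. ring. Qed.

Lemma sum_up_psum c a N : sum_up c a (S N) = sum_f_R0 (fun n => c (a + n)%nat) N.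
Proof. induction N.
  - simpl. rewrite Nat.add_0_r. ring.
  - rewrite sum_up_S, IHN, tech5. reflexivity. Qed.

Lemma sum_up_le c d a l : (forall i, (a <= i < a + l)%nat -> c i <= d i) -> sum_up c a l <= sum_up d a l.
Proof. revert a. induction l; intros a H; simpl; [lra|].
  pose proof (H a ltac:(lia)). assert (sum_up c (S a) l <= sum_up d (S a) l) by (apply IHl; intros; apply H; lia). lra. Qed.

Lemma sum_up_scal c k a l : sum_up (fun i => k * c i) a l = k * sum_up c a l.
Proof. revert a. induction l; intro a; simpl; [ring|]. rewrite IHl. ring. Qed.

Lemma prod_up_range f a l : (forall i, (a <= i < a + l)%nat -> 0 <= f i <= 1) -> 0 <= prod_up f a l <= 1.
Proof. revert a. induction l; intros a H; simpl; [lra|].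
  pose proof (H a ltac:(lia)). assert (0 <= prod_up f (S a) l <= 1) by (apply IHl; intros; apply H; lia). nra. Qed.

Lemma prod_up_mono f g a l : (forall i, (a <= i < a + l)%nat -> 0 <= f i <= g i /\ g i <= 1) ->
  prod_up f a l <= prod_up g a l.
Proof. revert a. induction l; intros a H; simpl; [lra|].
  pose proof (H a ltac:(lia)).
  assert (prod_up f (S a) l <= prod_up g (S a) l) by (apply IHl; intros; apply H; lia).
  assert (0 <= prod_up f (S a) l <= 1) by (apply prod_up_range; intros i Hi; specialize (H i ltac:(lia)); lra).
  nra. Qed.

Lemma prod_up_lower f c a l : (forall i, (a <= i < a + l)%nat -> 0 <= f i <= 1 /\ 1 - c i <= f i /\ 0 <= c i) ->
  1 - sum_up c a l <= prod_up f a l.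
Proof. revert a. induction l; intros a H; simpl; [lra|].
  pose proof (H a ltac:(lia)).
  assert (1 - sum_up c (S a) l <= prod_up f (S a) l) by (apply IHl; intros; apply H; lia).
  assert (0 <= prod_up f (S a) l <= 1) by (apply prod_up_range; intros i Hi; specialize (H i ltac:(lia)); lra).
  nra. Qed.

Lemma prod_cv (f : nat -> nat -> R) (L : nat -> R) a l :
  (forall i, (a <= i < a + l)%nat -> Un_cv (fun n => f n i) (L i)) ->
  Un_cv (fun n => prod_up (f n) a l) (prod_up L a l).
Proof. revert a. induction l; intros a H; simpl.
  - apply CV_const.
  - apply CV_mult; [apply H; lia|apply IHl; intros; apply H; lia]. Qed.

Lemma cv_lip (h : R -> R) u l K : 0 <= K -> (forall n, Rabs (h (u n) - h l) <= K * Rabs (u n - l)) ->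
  Un_cv u l -> Un_cv (fun n => h (u n)) (h l).
Proof. intros HK Hl Hu eps Heps.
  destruct (Hu (eps / (K + 1))) as [N HN]. { apply Rdiv_lt_0_compat; lra. }
  exists N. intros n Hn. specialize (HN n Hn). unfold R_dist in *. specialize (Hl n).
  assert (K * Rabs (u n - l) <= K * (eps / (K + 1))) by (apply Rmult_le_compat_l; lra).
  assert (K * (eps / (K + 1)) < eps).
  { unfold Rdiv. replace eps with ((K + 1) * (eps * / (K + 1))) at 2 by (field; lra).
    assert (0 < eps * / (K + 1)) by (apply Rmult_lt_0_compat; [lra|apply Rinv_0_lt_compat; lra]). nra. }
  lra. Qed.

Section MAIN.
Variables p q : nat -> nat -> R.
Variables rho m1 : nat -> R.
Variable M : R.
Hypothesis Hp : forall n, (1 <= n)%nat -> is_pmf (p n).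
Hypothesis Hq : forall n, (1 <= n)%nat -> is_pmf (q n).
Hypothesis Hrho : forall n, (1 <= n)%nat ->
     infinite_sum (fun k => INR k * p n k) (rho n) /\ rho n <= 1.
Hypothesis Hm1 : forall n, (1 <= n)%nat -> infinite_sum (fun k => INR k * q n k) (m1 n).
Hypothesis HM : infinite_sum (fun n => m1 (S n)) M.

Local Notation G := (fun i => pgf (p i)).
Local Notation H := (fun j => pgf (q j)).

Lemma m1_nonneg j : (1 <= j)%nat -> 0 <= m1 j.
Proof. intro Hj. apply (isum_nonneg (fun k => INR k * q j k)); [|auto].
  intro k. pose proof (pos_INR k). pose proof (proj1 (Hq j Hj) k). nra. Qed.

Lemma M_nonneg : 0 <= M.
Proof. apply (isum_nonneg (fun n => m1 (S n))); auto. intro k; apply m1_nonneg; lia. Qed.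

Lemma goodG_G : goodG G.
Proof. intros i Hi. pose proof (pmf_PGF _ (Hp i Hi)) as HG. pose proof (pgf_one _ (Hp i Hi)) as E.
  destruct (Hrho i Hi) as [Hr Hr1]. split; [|split; auto].
  - intros x Hx. split; [|apply (PGF_range _ _ x HG E Hx)].
    pose proof (PGF_lip _ _ _ x 1 HG Hr ltac:(lra) ltac:(lra) ltac:(lra)) as Hl. simpl in *. rewrite E in Hl.
    assert (0 <= rho i) by (apply (isum_nonneg (fun k => INR k * p i k)); auto; intro k;
      pose proof (pos_INR k); pose proof (proj1 (Hp i Hi) k); nra).
    nra.
  - intros x y H0 H1 H2. apply (PGF_mono _ _ x y HG); auto. Qed.

Lemma H_range j y : (1 <= j)%nat -> 0 <= y <= 1 -> 0 <= H j y <= 1.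
Proof. intros Hj Hy. apply (PGF_range _ _ y (pmf_PGF _ (Hq j Hj)) (pgf_one _ (Hq j Hj)) Hy). Qed.

Lemma H_mono j x y : (1 <= j)%nat -> 0 <= x -> x <= y -> y <= 1 -> H j x <= H j y.
Proof. intros Hj. apply (PGF_mono _ _ x y (pmf_PGF _ (Hq j Hj))). Qed.

Lemma H_lip j x y : (1 <= j)%nat -> 0 <= x <= 1 -> 0 <= y <= 1 ->
  Rabs (H j x - H j y) <= m1 j * Rabs (x - y).
Proof. intros Hj Hx Hy. pose proof (m1_nonneg j Hj).
  destruct (Rle_dec x y).
  - pose proof (PGF_lip _ _ _ x y (pmf_PGF _ (Hq j Hj)) (Hm1 j Hj) ltac:(lra) r ltac:(lra)).
    pose proof (H_mono j x y Hj ltac:(lra) r ltac:(lra)).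
    rewrite Rabs_minus_sym, (Rabs_minus_sym x). rewrite !Rabs_pos_eq by lra. simpl in *; lra.
  - pose proof (PGF_lip _ _ _ y x (pmf_PGF _ (Hq j Hj)) (Hm1 j Hj) ltac:(lra) ltac:(lra) ltac:(lra)).
    pose proof (H_mono j y x Hj ltac:(lra) ltac:(lra) ltac:(lra)).
    rewrite !Rabs_pos_eq by lra. simpl in *; lra. Qed.

Lemma H_low j y : (1 <= j)%nat -> 0 <= y <= 1 -> 1 - m1 j * (1 - y) <= H j y.
Proof. intros Hj Hy.
  pose proof (PGF_lip _ _ _ y 1 (pmf_PGF _ (Hq j Hj)) (Hm1 j Hj) ltac:(lra) ltac:(lra) ltac:(lra)) as Hl.
  rewrite (pgf_one _ (Hq j Hj)) in Hl. lra. Qed.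

Definition gfun n x := prod_up (fun j => pgf (q j) (Gbar (fun i => pgf (p i)) (S j) n x)) 1 n.

Lemma gfun_one n : gfun n 1 = 1.
Proof. unfold gfun. transitivity (prod_up (fun _ => 1) 1 n); [|apply prod_up_one]. apply prod_up_ext. intros i Hi.
  destruct i as [|j]; [lia|]. rewrite (Gbar_one _ goodG_G). apply pgf_one, Hq. lia. Qed.

Lemma gfun_succ n x : 0 <= x <= 1 -> gfun n (pgf (p (S n)) x) * pgf (q (S n)) x = gfun (S n) x.
Proof. intro Hx. unfold gfun. rewrite prod_up_S. f_equal.
  - apply prod_up_ext. intros i Hi. destruct i as [|j]; [lia|]. rewrite Gbar_succ by lia. reflexivity.
  - simpl. rewrite Gbar_self. reflexivity. Qed.

Lemma law_PGF n : PGF (law p q n) (gfun n).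
Proof. induction n.
  - simpl. eapply PGF_ext; [|apply PGF_delta0]. intros; unfold gfun; reflexivity.
  - simpl. apply (PGF_ext _ (fun x => gfun n (pgf (p (S n)) x) * pgf (q (S n)) x)); [apply gfun_succ|].
    apply (PGF_mix (law p q n) (fun m => conv (convpow (p (S n)) m) (q (S n))) (gfun n)
             (fun m x => pgf (p (S n)) x ^ m * pgf (q (S n)) x)).
    + exact IHn.
    + intro m. apply PGF_conv; [apply PGF_convpow|]; apply pmf_PGF; [apply Hp|apply Hq]; lia.
    + intro m. rewrite !pgf_one by (first [apply Hp|apply Hq]; lia). rewrite pow1; ring.
    + intros x Hx.
      assert (HGx : 0 <= pgf (p (S n)) x <= 1) by (apply (PGF_range _ _ x (pmf_PGF _ (Hp (S n) ltac:(lia))) (pgf_one _ (Hp (S n) ltac:(lia))) Hx)).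
      rewrite Rmult_comm. eapply isum_ext; [|apply (isum_scal _ _ (pgf (q (S n)) x) (proj2 IHn _ HGx))].
      intro k; simpl; ring.
Qed.

Definition Finf j x := lim (fun n => Gbar (fun i => pgf (p i)) (S j) n x).

Lemma Gbar_cv j x : 0 <= x <= 1 -> Un_cv (fun n => Gbar (fun i => pgf (p i)) (S j) n x) (Finf j x).
Proof. intro Hx.
  destruct (growing_cv (fun n => Gbar (fun i => pgf (p i)) (S j) n x)) as [L HL].
  - intro n. apply (Gbar_incr _ goodG_G); auto.
  - exists 1. intros z [i ->]. apply (Gbar_range _ goodG_G); auto.
  - unfold Finf. rewrite (lim_eq _ _ HL). exact HL. Qed.

Lemma Gbar_le_Finf j n x : 0 <= x <= 1 -> Gbar (fun i => pgf (p i)) (S j) n x <= Finf j x.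
Proof. intro Hx. apply (growing_ineq (fun n => Gbar (fun i => pgf (p i)) (S j) n x)); [|apply Gbar_cv; auto].
  intro m. apply (Gbar_incr _ goodG_G); auto. Qed.

Lemma Finf_range j x : 0 <= x <= 1 -> x <= Finf j x <= 1.
Proof. intro Hx. split.
  - eapply Rle_trans; [apply (proj1 (Gbar_range _ goodG_G j 0 x Hx))|apply Gbar_le_Finf; auto].
  - eapply Rle_cv_lim; [|apply Gbar_cv; auto|apply CV_const]. intro n. apply (Gbar_range _ goodG_G); auto. Qed.

Definition Pn N x := prod_up (fun j => pgf (q j) (Finf j x)) 1 N.

Lemma Pn_range N x : 0 <= x <= 1 -> 0 <= Pn N x <= 1.
Proof. intro Hx. apply prod_up_range. intros i Hi. apply H_range; [lia|]. pose proof (Finf_range i x Hx); lra. Qed.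

Lemma Pn_decr x : 0 <= x <= 1 -> Un_decreasing (fun N => Pn N x).
Proof. intros Hx N. unfold Pn. rewrite prod_up_S. pose proof (Pn_range N x Hx) as Hr. unfold Pn in Hr.
  pose proof (H_range (1 + N) (Finf (1 + N) x) ltac:(lia) ltac:(pose proof (Finf_range (1+N) x Hx); lra)).
  simpl in *. nra. Qed.

Definition Plim x := lim (fun N => Pn N x).

Lemma Pn_cv x : 0 <= x <= 1 -> Un_cv (fun N => Pn N x) (Plim x).
Proof. intro Hx. destruct (decreasing_cv (fun N => Pn N x)) as [L HL].
  - apply Pn_decr; auto.
  - exists 0. intros z [i ->]. unfold opp_seq. pose proof (Pn_range i x Hx). lra.
  - unfold Plim. rewrite (lim_eq _ _ HL). exact HL. Qed.

Lemma summ_le n : sum_up m1 1 n <= M.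
Proof. destruct n as [|n]; [simpl; apply M_nonneg|].
  pose proof (psum_le_lim (fun k => m1 (S k)) M ltac:(intro; apply m1_nonneg; lia) HM n) as Hl.
  rewrite sum_up_psum. exact Hl. Qed.

Lemma summ_cv : Un_cv (fun N => sum_up m1 1 N) M.
Proof. intros eps Heps. destruct (HM eps Heps) as [N HN]. exists (S N). intros n Hn.
  destruct n as [|n]; [lia|]. rewrite sum_up_psum. apply HN. lia. Qed.

Lemma Plim_low x : 0 <= x <= 1 -> 1 - M * (1 - x) <= Plim x.
Proof. intro Hx. eapply Rle_cv_lim; [|apply CV_const|apply Pn_cv; auto]. intro N.
  eapply Rle_trans; [|apply (prod_up_lower _ (fun j => m1 j * (1 - Finf j x)))].
  - assert (sum_up (fun j => m1 j * (1 - Finf j x)) 1 N <= M * (1 - x)); [|lra].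
    eapply Rle_trans; [apply (sum_up_le _ (fun j => (1 - x) * m1 j))|].
    + intros i Hi. pose proof (Finf_range i x Hx). pose proof (m1_nonneg i ltac:(lia)). nra.
    + rewrite sum_up_scal. pose proof (summ_le N). nra.
  - intros i Hi. pose proof (Finf_range i x Hx). pose proof (m1_nonneg i ltac:(lia)).
    split; [apply H_range; [lia|lra]|]. split; [apply H_low; [lia|lra]|]. nra.
Qed.

Lemma gfun_cv x : 0 <= x <= 1 -> Un_cv (fun n => gfun n x) (Plim x).
Proof.
  intros Hx eps Heps.
  destruct (summ_cv (eps / 3) ltac:(lra)) as [N0 HN0]. specialize (HN0 N0 (le_n _)).
  unfold R_dist in HN0. pose proof (summ_le N0). rewrite Rabs_left1 in HN0 by lra.
  set (t := M - sum_up m1 1 N0).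
  assert (HQ : Un_cv (fun n => prod_up (fun j => pgf (q j) (Gbar (fun i => pgf (p i)) (S j) n x)) 1 N0) (Pn N0 x)).
  { apply (prod_cv (fun n j => pgf (q j) (Gbar (fun i => pgf (p i)) (S j) n x))). intros i Hi.
    apply (cv_lip (pgf (q i)) (fun n => Gbar (fun i => pgf (p i)) (S i) n x) (Finf i x) (m1 i)).
    - apply m1_nonneg; lia.
    - intro n. apply H_lip; [lia| |]. + pose proof (Gbar_range _ goodG_G i n x Hx); lra.
      + pose proof (Finf_range i x Hx); lra.
    - apply Gbar_cv; auto. }
  destruct (HQ (eps / 3) ltac:(lra)) as [N1 HN1].
  destruct (Pn_cv x Hx eps Heps) as [N2 HN2].
  exists (N0 + N1 + N2)%nat. intros n Hn.
  specialize (HN1 n ltac:(lia)). specialize (HN2 n ltac:(lia)). unfold R_dist in *.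
  apply Rabs_def2 in HN1. apply Rabs_def2 in HN2.
  pose proof (decreasing_ineq _ _ (Pn_decr x Hx) (Pn_cv x Hx) N0) as HPd.
  assert (Up : gfun n x <= Pn n x).
  { apply prod_up_mono. intros i Hi. pose proof (Gbar_range _ goodG_G i n x Hx).
    pose proof (Finf_range i x Hx). pose proof (Gbar_le_Finf i n x Hx).
    split; [split|]; [apply H_range; [lia|lra]|apply H_mono; [lia|lra|lra|lra]|apply H_range; [lia|lra]]. }
  set (Q := prod_up (fun j => pgf (q j) (Gbar (fun i => pgf (p i)) (S j) n x)) 1 N0) in *.
  set (Rv := prod_up (fun j => pgf (q j) (Gbar (fun i => pgf (p i)) (S j) n x)) (1 + N0) (n - N0)).
  assert (Split : gfun n x = Q * Rv).
  { unfold gfun, Q, Rv. rewrite <- prod_up_add. f_equal. lia. }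
  assert (QR : 0 <= Q <= 1).
  { apply prod_up_range. intros i Hi. apply H_range; [lia|]. pose proof (Gbar_range _ goodG_G i n x Hx); lra. }
  assert (RL : 1 - t <= Rv).
  { eapply Rle_trans; [|apply (prod_up_lower _ (fun j => m1 j * (1 - Gbar (fun i => pgf (p i)) (S j) n x)))].
    - assert (sum_up (fun j => m1 j * (1 - Gbar (fun i => pgf (p i)) (S j) n x)) (1 + N0) (n - N0) <= t); [|lra].
      eapply Rle_trans; [apply (sum_up_le _ m1)|].
      + intros i Hi. pose proof (Gbar_range _ goodG_G i n x Hx). pose proof (m1_nonneg i ltac:(lia)). nra.
      + pose proof (summ_le n). pose proof (sum_up_add m1 1 N0 (n - N0)) as Ha.
        replace (N0 + (n - N0))%nat with n in Ha by lia. unfold t. lra.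
    - intros i Hi. pose proof (Gbar_range _ goodG_G i n x Hx). pose proof (m1_nonneg i ltac:(lia)).
      split; [apply H_range; [lia|lra]|]. split; [apply H_low; [lia|lra]|]. nra. }
  rewrite Split in *. apply Rabs_def1.
  - lra.
  - assert (0 <= t) by (unfold t; lra). cbv beta in HPd.
    assert (Q * (1 - t) <= Q * Rv) by (apply Rmult_le_compat_l; lra).
    assert (Q * t <= t) by nra. unfold t in *. lra.
Qed.

End MAIN.

Theorem theorem6
  (p q : nat -> nat -> R)      (* p n = law of xi_{n,1}, q n = law of eps_n *)
  (rho m1 : nat -> R) (r : R)
  (Hp : forall n, (1 <= n)%nat -> is_pmf (p n))
  (Hq : forall n, (1 <= n)%nat -> is_pmf (q n))
  (Hrho : forall n, (1 <= n)%nat ->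
     infinite_sum (fun k => INR k * p n k) (rho n) /\ rho n <= 1)
  (Hm1 : forall n, (1 <= n)%nat -> infinite_sum (fun k => INR k * q n k) (m1 n))
  (Hprod : Un_cv (fun N => prodR rho 2 N) r)
  (Hr : 0 < r < 1)
  (Hsum : exists M, infinite_sum (fun n => m1 (S n)) M) :
  (forall j x, 0 <= x <= 1 ->
     exists L, Un_cv (fun n => Gbar (fun i => pgf (p i)) (S j) n x) L) /\
  exists y : nat -> R,
    is_pmf y /\
    (forall k, Un_cv (fun n => law p q n k) (y k)) /\
    (forall x, 0 <= x <= 1 ->
       Un_cv (fun N => prodR (fun j =>
                 pgf (q j) (lim (fun n => Gbar (fun i => pgf (p i)) (S j) n x))) 1 N)
             (pgf y x)).
Proof.
  destruct Hsum as [M HM].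
  split.
  { intros j x Hx. exists (Finf p j x). apply (Gbar_cv p rho Hp Hrho j x Hx). }
  pose proof (law_PGF p q Hp Hq) as HPGF.
  pose proof (gfun_one p q rho Hp Hq Hrho) as Hg1.
  pose proof (gfun_cv p q rho m1 M Hp Hq Hrho Hm1 HM) as HP.
  exists (ylim (law p q)).
  assert (Hy : is_pmf (ylim (law p q))).
  { apply (ylim_pmf (law p q) (gfun p q) (Plim p q) HPGF Hg1 HP M (M_nonneg q m1 M Hq Hm1 HM)).
    intros x Hx. apply (Plim_low p q rho m1 M Hp Hq Hrho Hm1 HM). lra. }
  split; [exact Hy|]. split; [apply (ylim_cv _ _ _ HPGF Hg1 HP)|].
  intros x Hx.
  apply (Un_cv_ext (fun N => Pn p q N x)); [intro N; rewrite prodR1; reflexivity|].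
  replace (pgf (ylim (law p q)) x) with (Plim p q x); [apply (Pn_cv p q rho Hp Hq Hrho x Hx)|].
  destruct (Rle_lt_or_eq_dec x 1 (proj2 Hx)) as [Hlt|Heq].
  - symmetry. apply series_eq. apply (ylim_pgf _ _ _ HPGF Hg1 HP). lra.
  - subst x. rewrite (pgf_one _ Hy).
    apply (UL_sequence (fun n => gfun p q n 1)); [apply HP; lra|].
    eapply Un_cv_ext; [|apply (CV_const 1)]. intro n; simpl; symmetry; apply Hg1.
Qed.
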